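(* In the setting described in the context, let $\bar{\mathcal{Z}}^*$ be the set of minimizers over $z\in\{0,1\}^p$ of $$\bar\mu(z):=\mathbb{E}_{p(e)p_e(x,y)}\big[\log\bar p_e(y\mid x^z)-\log\bar g(y\mid x^z)\big].$$ Assume $p(\bar{\mathcal{Z}}^* )>0$ and that for every $z$ with $p(z)>0$, as $n\to\infty$ and $E\to\infty$, $$\frac{1}{nE}\sum_{i=1}^n\sum_{e=1}^E\log\hat p_e(y_{ei}\mid x_{ei}^z)\xrightarrow{P}\mathbb{E}_{p(e)p_e(y,x^z)}[\log\bar p_e(y\mid x^z)],\qquad\frac{1}{nE}\sum_{i=1}^n\sum_{e=1}^E\log\hat g(y_{ei}\mid x_{ei}^z)\xrightarrow{P}\mathbb{E}_{p(e)p_e(y,x^z)}[\log\bar g(y\mid x^z)].$$ Then, as $n\to\infty$ and $E\to\infty$: (i) $P(\hat z_{n,E}\in\bar{\mathcal{Z}}^* )\to 1$, where $\hat z_{n,E}:=\arg\max_z\hat p(z\mid\mathcal{D})$; and (ii) $\hat p(\bar{\mathcal{Z}}^*\mid\mathcal{D})\xrightarrow{P}1$.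
   Context: Features $x\in\mathbb{R}^p$, outcome $y$. For $z\in\{0,1\}^p$, $x^z$ is the subvector of coordinates $j$ with $z^{(j)}=1$. $\mathcal{E}$ is the set of all environments of interest; each $e\in\mathcal{E}$ has a joint density $p_e(x,y)$; $p(e)$ is the uniform distribution over $\mathcal{E}$. For each $z$ a conditional model class $\mathcal{P}_{y\mid x^z}$ is fixed. The best-fitting local and pooled models are $\bar p_e(y\mid x^z):=\arg\max_{\tilde p\in\mathcal{P}_{y\mid x^z}}\mathbb{E}_{p_e(x,y)}\log\tilde p(y\mid x^z)$ and $\bar g(y\mid x^z):=\arg\max_{\tilde p\in\mathcal{P}_{y\mid x^z}}\sum_{e\in\mathcal{E}}\mathbb{E}_{p_e(x,y)}\log\tilde p(y\mid x^z)$. Data: $E$ environments drawn i.i.d. from $p(e)$, relabeled $e=1,\dots,E$; in each, $n$ i.i.d. observations $(x_{ei},y_{ei})$ from $p_e(x,y)$; $\mathcal{D}$ is all data. A prior $p(z)$ on $\{0,1\}^p$ is given. $\hat p_e(y\mid x^z)$ maximizes $\sum_{i=1}^n\log\tilde p(y_{ei}\mid x_{ei}^z)$ and $\hat g(y\mid x^z)$ maximizes $\sum_{e=1}^E\sum_{i=1}^n\log\tilde p(y_{ei}\mid x_{ei}^z)$ over $\tilde p\in\mathcal{P}_{y\mid x^z}$. The estimated BIP posterior is $\hat p(z\mid\mathcal{D})\propto p(z)\prod_{e=1}^E\prod_{i=1}^n\frac{\hat g(y_{ei}\mid x_{ei}^z)}{\hat p_e(y_{ei}\mid x_{ei}^z)}$,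 and $\hat p(\bar{\mathcal{Z}}^*\mid\mathcal{D})=\sum_{z\in\bar{\mathcal{Z}}^*}\hat p(z\mid\mathcal{D})$. *)

(* Defs.v *)
From HB Require Import structures.
From mathcomp Require Import all_boot all_order all_algebra.
From mathcomp Require Import all_classical all_reals all_analysis.
Set Implicit Arguments. Unset Strict Implicit. Unset Printing Implicit Defensive.
Import Order.TTheory GRing.Theory Num.Theory.
Local Open Scope classical_set_scope.
Local Open Scope ring_scope.

Definition subsel (p : nat) := {ffun 'I_p -> bool}.

Section Defs.
Context {R : realType} {d : measure_display} {Omega : measurableType d}
  (P : probability Omega R).

Definition cvg_in_prob2 (X : nat -> nat -> Omega -> R) (c : R) : Prop :=
  forall eps : R, 0 < eps -> forall delta : R, 0 < delta ->
  exists N : nat, forall n E : nat, (N <= n)%N -> (N <= E)%N ->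
    (P [set w | (eps <= `|X n E w - c|)%R] <= delta%:E)%E.

Definition prob_to_one2 (A : nat -> nat -> set Omega) : Prop :=
  forall delta : R, 0 < delta ->
  exists N : nat, forall n E : nat, (N <= n)%N -> (N <= E)%N ->
    ((1 - delta)%:E <= P (A n E))%E.
End Defs.

Definition bip_weight {R : realType} {Omega : Type} {p : nat}
  (prior : subsel p -> R)
  (phat ghat : nat -> nat -> subsel p -> nat -> nat -> Omega -> R)
  (n E : nat) (z : subsel p) (w : Omega) : R :=
  prior z * \prod_(e < E) \prod_(i < n)
     (ghat n E z e i w / phat n E z e i w).

Definition bip_post {R : realType} {Omega : Type} {p : nat}
  (prior : subsel p -> R)
  (phat ghat : nat -> nat -> subsel p -> nat -> nat -> Omega -> R)
  (n E : nat) (z : subsel p) (w : Omega) : R :=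
  bip_weight prior phat ghat n E z w /
  \sum_(z' : subsel p) bip_weight prior phat ghat n E z' w.

Definition avg_loglik {R : realType} {Omega : Type} {p : nat}
  (f : nat -> nat -> subsel p -> nat -> nat -> Omega -> R)
  (z : subsel p) (n E : nat) (w : Omega) : R :=
  (n * E)%:R^-1 * \sum_(i < n) \sum_(e < E) ln (f n E z e i w).

Definition mubar {R : realType} {dT : measure_display} {T : measurableType dT}
  {p : nat} (Q : probability T R) (lpbar lgbar : subsel p -> T -> R)
  (z : subsel p) : \bar R :=
  ('E_Q[fun t => (lpbar z t - lgbar z t)%R])%E.

Definition Zstar {R : realType} {dT : measure_display} {T : measurableType dT}
  {p : nat} (Q : probability T R) (lpbar lgbar : subsel p -> T -> R)
  : pred (subsel p) :=
  [pred z | [forall z', (mubar Q lpbar lgbar z <= mubar Q lpbar lgbar z')%E]].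

(* Main.v *)
Require Import Defs.
From HB Require Import structures.
From mathcomp Require Import all_boot all_order all_algebra.
From mathcomp Require Import all_classical all_reals all_analysis.
From mathcomp Require Import ring lra zify measurable_realfun.
Import Order.TTheory GRing.Theory Num.Theory.
Local Open Scope classical_set_scope.
Local Open Scope ring_scope.

Lemma key_ineq (R : realType) (pz p0 r g K dz d0 : R) :
  0 < pz -> 0 < p0 -> 0 < r -> 0 < g -> 0 < K ->
  dz - d0 <= - (g / 2) -> 2 * pz / (g * r * p0) < K ->
  pz * expR (K * dz) <= r * (p0 * expR (K * d0)).
Proof.
move=> pz0 p00 r0 g0 K0 hd hK.
have e0 := expR_gt0 (K * d0).
set t := expR (K * (dz - d0)).
have -> : expR (K * dz) = t * expR (K * d0).
  by rewrite /t -expRD; congr expR; ring.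
have ht : t * (1 + K * g / 2) <= 1.
  have h1 : t <= expR (- (K * g / 2)).
    rewrite /t ler_expR.
    have : K * (dz - d0) <= K * (- (g / 2)) by rewrite ler_pM2l.
    by move=> h; apply: (le_trans h); rewrite le_eqVlt; apply/orP; left; apply/eqP; ring.
  have h2 := expR_ge1Dx (K * g / 2).
  have t0 : 0 <= t by apply/ltW/expR_gt0.
  have : t * (1 + K * g / 2) <= expR (- (K * g / 2)) * expR (K * g / 2).
    apply: ler_pM => //; first by rewrite addr_ge0 // divr_ge0 // mulr_ge0 // ltW.
  by rewrite -expRD addNr expR0.
have hK' : 2 * pz < K * (g * r * p0).
  by rewrite -ltr_pdivrMr // mulr_gt0 // mulr_gt0.
have t0 : 0 <= t by apply/ltW/expR_gt0.
have -> : pz * (t * expR (K * d0)) = (pz * t) * expR (K * d0) by ring.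
rewrite mulrA ler_pM2r //.
have a1 : 2 * pz * t <= K * (g * r * p0) * t by rewrite ler_wpM2r // ltW.
have rp : 0 < r * p0 by rewrite mulr_gt0.
have a2 : r * p0 * (t * (1 + K * g / 2)) <= r * p0 * 1 by rewrite ler_pM2l.
nra.
Qed.
Section W.
Context (R : realType) (p : nat) (Omega : Type) (prior : subsel p -> R)
  (phat ghat : nat -> nat -> subsel p -> nat -> nat -> Omega -> R).
Hypothesis php : forall n E z e i w, 0 < phat n E z e i w.
Hypothesis ghp : forall n E z e i w, 0 < ghat n E z e i w.

Lemma weight_exp n E z w : bip_weight prior phat ghat n E z w =
  prior z * expR (\sum_(e < E) \sum_(i < n)
     (ln (ghat n E z e i w) - ln (phat n E z e i w))).
Proof.
rewrite /bip_weight; congr (_ * _).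
rewrite expR_sum; apply: eq_bigr => e _; rewrite expR_sum; apply: eq_bigr => i _.
rewrite -lnV ?posrE // -lnM ?posrE ?invr_gt0 // lnK // posrE.
by rewrite divr_gt0.
Qed.

Lemma sum_avg n E z w : (0 < n)%N -> (0 < E)%N ->
  \sum_(e < E) \sum_(i < n) (ln (ghat n E z e i w) - ln (phat n E z e i w)) =
  (n * E)%:R * (avg_loglik ghat z n E w - avg_loglik phat z n E w).
Proof.
move=> n0 E0; rewrite /avg_loglik -mulrBr mulrA mulfV ?mul1r; last first.
  by rewrite pnatr_eq0 -lt0n muln_gt0 n0.
rewrite exchange_big /= -sumrB; apply: eq_bigr => i _.
by rewrite -sumrB.
Qed.

Lemma weight_avg n E z w : (0 < n)%N -> (0 < E)%N ->
  bip_weight prior phat ghat n E z w =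
  prior z * expR ((n * E)%:R * (avg_loglik ghat z n E w - avg_loglik phat z n E w)).
Proof. by move=> n0 E0; rewrite weight_exp sum_avg. Qed.

Lemma weight_ge0 n E z w : 0 <= prior z -> 0 <= bip_weight prior phat ghat n E z w.
Proof. by move=> h; rewrite weight_exp mulr_ge0 // ltW // expR_gt0. Qed.

Lemma weight_gt0 n E z w : 0 < prior z -> 0 < bip_weight prior phat ghat n E z w.
Proof. by move=> h; rewrite weight_exp mulr_gt0 // expR_gt0. Qed.
End W.

Section M.
Context (R : realType) (p : nat) (d : measure_display) (Omega : measurableType d)
  (prior : subsel p -> R)
  (phat ghat : nat -> nat -> subsel p -> nat -> nat -> Omega -> R).
Hypothesis php : forall n E z e i w, 0 < phat n E z e i w.
Hypothesis ghp : forall n E z e i w, 0 < ghat n E z e i w.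
Hypothesis mp : forall n E z e i, measurable_fun setT (phat n E z e i).
Hypothesis mg : forall n E z e i, measurable_fun setT (ghat n E z e i).

Lemma mavg (f : nat -> nat -> subsel p -> nat -> nat -> Omega -> R) z n E :
  (forall e i, measurable_fun setT (f n E z e i)) ->
  measurable_fun setT (avg_loglik f z n E).
Proof.
move=> mf; rewrite /avg_loglik.
apply: measurable_funM; first exact: measurable_cst.
apply: measurable_sum => i; apply: measurable_sum => e.
by apply: measurableT_comp; [exact: measurable_ln|exact: mf].
Qed.

Lemma mweight n E z : measurable_fun setT (bip_weight prior phat ghat n E z).
Proof.
rewrite (_ : bip_weight _ _ _ n E z = fun w => prior z * expR (\sum_(e < E) \sum_(i < n)
     (ln (ghat n E z e i w) - ln (phat n E z e i w)))); last first.
  by apply/funext => w; rewrite weight_exp.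
apply: measurable_funM; first exact: measurable_cst.
apply: measurableT_comp; first exact: measurable_expR.
apply: measurable_sum => e; apply: measurable_sum => i.
apply: measurable_funB.
  by apply: measurableT_comp; [exact: measurable_ln|exact: mg].
by apply: measurableT_comp; [exact: measurable_ln|exact: mp].
Qed.

Lemma mdev (f : Omega -> R) (c eps : R) : measurable_fun setT f ->
  measurable [set w | eps <= `|f w - c|].
Proof.
move=> mf; rewrite -[X in measurable X]setTI.
apply: (@measurable_fun_le _ _ _ setT (fun _ => eps) (fun w => `|f w - c|)) => //.
apply: measurableT_comp; first exact: normr_measurable.
by apply: measurable_funB => //; exact: measurable_cst.
Qed.
End M.

Lemma P_bigU d (Omega : measurableType d) (R : realType) (P : probability Omega R)
  (I : Type) (s : seq I) (F : I -> set Omega) :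
  (forall i, measurable (F i)) ->
  (P (\big[setU/set0]_(i <- s) F i) <= \sum_(i <- s) P (F i))%E.
Proof.
move=> mF; elim: s => [|i s ih]; first by rewrite !big_nil measure0.
rewrite !big_cons; apply: le_trans (measureU2 _ _ _) _ => //.
  by apply: bigsetU_measurable.
exact: leeD.
Qed.

Lemma sub_bigU (T : Type) (I : eqType) (s : seq I) (F : I -> set T) i :
  i \in s -> F i `<=` \big[setU/set0]_(j <- s) F j.
Proof.
elim: s => [//|j s ih]; rewrite inE big_cons => /orP [/eqP <-|his] x Fx.
  by left.
by right; apply: ih.
Qed.

Lemma quarter4 (R : realType) (x : R) : x / 4 + x / 4 + x / 4 + x / 4 <= x.
Proof. lra. Qed.

Lemma lin_help (R : realType) (az bz a0 b0 pz gz p0 g0 e : R) :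
  e = ((pz - gz) - (p0 - g0)) / 8 ->
  `|az - pz| < e -> `|bz - gz| < e -> `|a0 - p0| < e -> `|b0 - g0| < e ->
  (bz - az) - (b0 - a0) <= - (((pz - gz) - (p0 - g0)) / 2).
Proof.
move=> ->; rewrite !ltr_distl => /andP[h1 h2] /andP[h3 h4] /andP[h5 h6] /andP[h7 h8].
lra.
Qed.

Lemma half_lt (R : realType) (x : R) : 0 < x -> 1 / 2 * x < x.
Proof. move=> h; lra. Qed.

Lemma ereal_help (R : realType) (x : \bar R) (dl : R) : x \is a fin_num ->
  (1 - x <= dl%:E)%E -> ((1 - dl)%:E <= x)%E.
Proof.
case: x => // r _; rewrite -EFinB !lee_fin => h; lra.
Qed.

Lemma abs_help (R : realType) (a b : R) : 0 <= a -> 0 <= b -> 0 < a + b ->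
  `|a / (a + b) - 1| = b / (a + b).
Proof.
move=> a0 b0 ab0.
have -> : a / (a + b) - 1 = - (b / (a + b)).
  by field; rewrite gt_eqF.
by rewrite normrN ger0_norm // divr_ge0 // ltW.
Qed.

Lemma fin_help (R : realType) (Sn W w0 r c eps : R) : 0 < W -> w0 <= W ->
  0 < eps -> r * c = eps / 2 -> Sn <= r * w0 * c -> Sn / W < eps.
Proof.
move=> W0 w0W e0 rc hS.
rewrite ltr_pdivrMr //.
have h1 : r * w0 * c = eps / 2 * w0 by rewrite -rc; ring.
have h2 : eps / 2 * w0 <= eps / 2 * W by rewrite ler_pM2l // divr_gt0.
have h3 : eps / 2 * W < eps * W by rewrite ltr_pM2r // ltr_pdivrMr //; lra.
rewrite h1 in hS; lra.
Qed.

Theorem theorem7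
  (R : realType) (p : nat)
  (d : measure_display) (Omega : measurableType d) (P : probability Omega R)
  (dT : measure_display) (T : measurableType dT) (Q : probability T R)
  (lpbar lgbar : subsel p -> T -> R)
  (prior : subsel p -> R)
  (phat ghat : nat -> nat -> subsel p -> nat -> nat -> Omega -> R)
  (zhat : nat -> nat -> Omega -> subsel p) :
  (forall z, 0 <= prior z) ->
  \sum_(z : subsel p) prior z = 1 ->
  (forall z, measurable_fun setT (lpbar z)) ->
  (forall z, measurable_fun setT (lgbar z)) ->
  (forall n E z e i, measurable_fun setT (phat n E z e i)) ->
  (forall n E z e i, measurable_fun setT (ghat n E z e i)) ->
  (forall n E z e i w, 0 < phat n E z e i w) ->
  (forall n E z e i w, 0 < ghat n E z e i w) ->
  0 < \sum_(z in Zstar Q lpbar lgbar) prior z ->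
  (forall z, 0 < prior z ->
     Q.-integrable setT (EFin \o lpbar z) /\
     Q.-integrable setT (EFin \o lgbar z) /\
     cvg_in_prob2 P (fun n E => avg_loglik phat z n E)
       (fine 'E_Q[lpbar z]) /\
     cvg_in_prob2 P (fun n E => avg_loglik ghat z n E)
       (fine 'E_Q[lgbar z])) ->
  (forall n E w z,
     bip_post prior phat ghat n E z w <= bip_post prior phat ghat n E (zhat n E w) w) ->
  (forall n E z, measurable [set w | zhat n E w = z]) ->
  prob_to_one2 P (fun n E => [set w | zhat n E w \in Zstar Q lpbar lgbar])
  /\
  cvg_in_prob2 P
     (fun n E w => \sum_(z in Zstar Q lpbar lgbar) bip_post prior phat ghat n E z w) 1.
Proof.
move=> pr0 prsum mlp mlg mp mg php ghp hZ hcons hmax mzhat.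
set Zs := Zstar Q lpbar lgbar in hZ *.
set wt := bip_weight prior phat ghat.
have [z0 [z0Z pz0]] : exists z0, z0 \in Zs /\ 0 < prior z0.
  apply: contrapT => hn.
  have h0 : \sum_(z in Zs) prior z <= \sum_(z in Zs) (0:R).
    apply: ler_sum => z zZ; rewrite leNgt; apply/negP => pz; apply: hn; by exists z.
  rewrite big1_eq in h0.
  by move: (lt_le_trans hZ h0); rewrite ltxx.
pose cp z := fine 'E_Q[lpbar z].
pose cg z := fine 'E_Q[lgbar z].
pose m z := cp z - cg z.
have mubarE z : 0 < prior z -> mubar Q lpbar lgbar z = (m z)%:E.
  move=> pz; have [il [ig _]] := hcons z pz.
  rewrite /mubar.
  rewrite (_ : (fun t => lpbar z t - lgbar z t) = lpbar z \- lgbar z) //.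
  rewrite expectationB; [|exact/Lfun1_integrable|exact/Lfun1_integrable].
  rewrite /m /cp /cg EFinB !fineK //; apply: expectation_fin_num; exact/Lfun1_integrable.
have gap z : 0 < prior z -> z \notin Zs -> m z0 < m z.
  move=> pz zZ; rewrite ltNge; apply/negP => hle.
  move/negP: zZ; apply; rewrite inE /=; apply/forallP => z'.
  move: z0Z; rewrite inE /= => /forallP /(_ z'); apply: le_trans.
  by rewrite !mubarE // lee_fin.
pose e z := (m z - m z0) / 8.
pose Dev (f : nat -> nat -> subsel p -> nat -> nat -> Omega -> R) (z : subsel p) (c eps : R) (n E : nat) : set Omega := [set w | eps <= `|avg_loglik f z n E w - c|].
pose bad z := (0 < prior z) && (z \notin Zs).
pose Bz (z : subsel p) (n E : nat) : set Omega := if bad z then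
   Dev phat z (cp z) (e z) n E `|` Dev ghat z (cg z) (e z) n E `|`
   Dev phat z0 (cp z0) (e z) n E `|` Dev ghat z0 (cg z0) (e z) n E else set0.
have mDev f z c eps n E : (forall n E z e i, measurable_fun setT (f n E z e i)) ->
    measurable (Dev f z c eps n E).
  by move=> mf; apply: mdev; apply: mavg => e' i; apply: mf.
have mBz z n E : measurable (Bz z n E).
  rewrite /Bz; case: ifP => _ //.
  by apply: measurableU; [apply: measurableU; [apply: measurableU|]|]; apply: mDev.
have probB dl : 0 < dl -> forall z, exists N, forall n E, (N <= n)%N -> (N <= E)%N ->
    (P (Bz z n E) <= dl%:E)%E.
  move=> dl0 z; rewrite /Bz; case bz: (bad z); last first.
    by exists 0%N => n E _ _; rewrite measure0 lee_fin ltW.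
  move/andP: bz => [pz zZ].
  have ez : 0 < e z by rewrite /e divr_gt0 // subr_gt0 gap.
  have [_ [_ [c1 c2]]] := hcons z pz.
  have [_ [_ [c3 c4]]] := hcons z0 pz0.
  have dl4 : 0 < dl / 4 by rewrite divr_gt0.
  have [N1 h1] := c1 _ ez _ dl4.
  have [N2 h2] := c2 _ ez _ dl4.
  have [N3 h3] := c3 _ ez _ dl4.
  have [N4 h4] := c4 _ ez _ dl4.
  exists (maxn (maxn N1 N2) (maxn N3 N4)) => n E hn hE.
  have g1 := h1 n E (leq_trans (leq_trans (leq_maxl N1 N2) (leq_maxl _ _)) hn) (leq_trans (leq_trans (leq_maxl N1 N2) (leq_maxl _ _)) hE).
  have g2 := h2 n E (leq_trans (leq_trans (leq_maxr N1 N2) (leq_maxl _ _)) hn) (leq_trans (leq_trans (leq_maxr N1 N2) (leq_maxl _ _)) hE).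
  have g3 := h3 n E (leq_trans (leq_trans (leq_maxl N3 N4) (leq_maxr _ _)) hn) (leq_trans (leq_trans (leq_maxl N3 N4) (leq_maxr _ _)) hE).
  have g4 := h4 n E (leq_trans (leq_trans (leq_maxr N3 N4) (leq_maxr _ _)) hn) (leq_trans (leq_trans (leq_maxr N3 N4) (leq_maxr _ _)) hE).
  apply: le_trans (measureU2 _ _ _) _; [by apply: measurableU; [apply: measurableU|]; apply: mDev|exact: mDev|].
  apply: le_trans (leeD (measureU2 _ _ _) (lexx _)) _; [by apply: measurableU; apply: mDev|exact: mDev|].
  apply: le_trans (leeD (leeD (measureU2 _ _ _) (lexx _)) (lexx _)) _; [exact: mDev|exact: mDev|].
  apply: le_trans (leeD (leeD (leeD g1 g2) g3) g4) _.
  by rewrite -!EFinD lee_fin; apply: quarter4.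
have detB r : 0 < r -> forall z, exists M, forall n E, (M <= n)%N -> (M <= E)%N ->
    forall w, ~ Bz z n E w -> z \notin Zs -> wt n E z w <= r * wt n E z0 w.
  move=> r0 z; case bz: (bad z).
    have := bz; move/andP => [pz zZ].
    have g0 : 0 < m z - m z0 by rewrite subr_gt0 gap.
    pose x := 2 * prior z / ((m z - m z0) * r * prior z0).
    have x0 : 0 <= x by rewrite /x divr_ge0 // ?mulr_ge0 // ltW // ?mulr_gt0.
    exists (Num.bound x) => n E hn hE w nB _.
    have n0 : (0 < n)%N by apply: leq_trans hn.
    have E0 : (0 < E)%N by apply: leq_trans hE.
    rewrite /wt !weight_avg //.
    rewrite /Bz bz in nB.
    have d1 : `|avg_loglik phat z n E w - cp z| < e z.
      by rewrite ltNge; apply/negP => h; apply: nB; left; left; left.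
    have d2 : `|avg_loglik ghat z n E w - cg z| < e z.
      by rewrite ltNge; apply/negP => h; apply: nB; left; left; right.
    have d3 : `|avg_loglik phat z0 n E w - cp z0| < e z.
      by rewrite ltNge; apply/negP => h; apply: nB; left; right.
    have d4 : `|avg_loglik ghat z0 n E w - cg z0| < e z.
      by rewrite ltNge; apply/negP => h; apply: nB; right.
    apply: (@key_ineq R _ _ _ (m z - m z0)) => //.
    - by rewrite ltr0n muln_gt0 n0.
    - have eq : e z = ((cp z - cg z) - (cp z0 - cg z0)) / 8 by [].
      exact: (@lin_help R _ _ _ _ _ _ _ _ _ eq d1 d2 d3 d4).
    - apply: lt_le_trans (archi_boundP x0) _.
      by rewrite ler_nat (leq_trans hn) // leq_pmulr.
  exists 0%N => n E _ _ w _ zZ.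
  have pz : prior z = 0.
    apply/eqP; rewrite eq_le pr0 andbT leNgt; apply/negP => h.
    by move: bz; rewrite /bad h zZ.
  rewrite /wt weight_exp // pz mul0r; apply: mulr_ge0; first exact: ltW.
  exact: weight_ge0.
have cpos : (0 < #|{: subsel p}|)%N by apply/card_gt0P; exists z0.
pose c : R := (#|{: subsel p}|)%:R.
have c0 : 0 < c by rewrite ltr0n.
have comb r dl : 0 < r -> 0 < dl -> exists N, forall n E, (N <= n)%N -> (N <= E)%N ->
   exists B : set Omega, measurable B /\ (P B <= dl%:E)%E /\
     forall w, ~ B w -> forall z, z \notin Zs -> wt n E z w <= r * wt n E z0 w.
  move=> r0 dl0.
  have [Nf hN] := boolp.choice (probB (dl / c) (divr_gt0 dl0 c0)).
  have [Mf hM] := boolp.choice (detB r r0).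
  exists (\big[maxn/0%N]_(z : subsel p) Nf z + \big[maxn/0%N]_(z : subsel p) Mf z)%N => n E hn hE.
  exists (\big[setU/set0]_(z <- index_enum (subsel p)) Bz z n E); split.
    by apply: bigsetU_measurable => z _.
  split.
    apply: le_trans (@P_bigU _ _ _ P _ _ _ (fun z => mBz z n E)) _.
    apply: le_trans (@lee_sum R _ (fun z => P (Bz z n E)) (fun=> (dl / c)%:E) (index_enum _) xpredT _) _.
      move=> z _; apply: hN.

      - exact: (leq_trans (@leq_bigmax _ Nf z) (leq_trans (leq_addr _ _) hn)).
      - exact: (leq_trans (@leq_bigmax _ Nf z) (leq_trans (leq_addr _ _) hE)).
    by rewrite sumEFin lee_fin sumr_const -mulr_natr divfK // gt_eqF.
  move=> w nB z zZ; apply: (hM z n E _ _ w _ zZ).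
  - exact: (leq_trans (@leq_bigmax _ Mf z) (leq_trans (leq_addl _ _) hn)).
  - exact: (leq_trans (@leq_bigmax _ Mf z) (leq_trans (leq_addl _ _) hE)).
  - by move=> h; apply: nB; exact: (@sub_bigU _ _ _ (fun z => Bz z n E) z (mem_index_enum z) w h).
have w0pos n E w : 0 < wt n E z0 w by apply: weight_gt0.
have w0leW n E w : wt n E z0 w <= \sum_(z : subsel p) wt n E z w.
  rewrite (bigD1 z0) //= lerDl; apply: sumr_ge0 => z _; exact: weight_ge0.
have Wpos n E w : 0 < \sum_(z : subsel p) wt n E z w.
  exact: lt_le_trans (w0pos n E w) (w0leW n E w).
split.
  move=> dl dl0.
  have [N hN] := comb (1 / 2) dl ltac:(by rewrite divr_gt0) dl0.
  exists N => n E hn hE.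
  have [B [mB [PB hB]]] := hN n E hn hE.
  pose A := [set w | zhat n E w \in Zs].
  have mA : measurable A.
    rewrite (_ : A = \bigcup_(z in [set z | z \in Zs]) [set w | zhat n E w = z]).
      apply: fin_bigcup_measurable; first exact: finite_finset.
      by move=> z _; exact: mzhat.
    apply/seteqP; split => w /=.
      by move=> h; exists (zhat n E w).
    by move=> [z zZ hz]; rewrite /A /= hz.
  have AB : ~` A `<=` B.
    move=> w nA; apply: contrapT => nB; apply: nA.
    rewrite /A /=; apply/negPn/negP => zZ.
    have h1 := hB w nB (zhat n E w) zZ.
    have h2 := hmax n E w z0.
    have Wp := Wpos n E w.
    rewrite /bip_post ler_pM2r ?invr_gt0 // in h2.
    have := le_lt_trans h2 (le_lt_trans h1 (@half_lt R _ (w0pos n E w))).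
    by rewrite ltxx.
  have hPA : (P (~` A) <= P B)%E.
    by apply: le_measure; rewrite ?inE //; exact: measurableC.
  rewrite probability_setC // in hPA.
  apply: ereal_help; first exact: fin_num_measure.
  exact: le_trans hPA PB.
move=> eps eps0 dl dl0.
pose r := eps / (2 * c).
have r0 : 0 < r by rewrite divr_gt0 // mulr_gt0.
have rc : r * c = eps / 2.
  by rewrite /r; field; rewrite gt_eqF.
have [N hN] := comb r dl r0 dl0.
exists N => n E hn hE.
have [B [mB [PB hB]]] := hN n E hn hE.
pose Sn w := \sum_(z : subsel p) (if z \notin Zs then wt n E z w else 0).
pose W w := \sum_(z : subsel p) wt n E z w.
have ident w : `|\sum_(z in Zs) bip_post prior phat ghat n E z w - 1| = Sn w / W w.
  have eW : W w = \sum_(z in Zs) wt n E z w + Sn w.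
    rewrite /W /Sn [\sum_(z in Zs) _]big_mkcond -big_split /=; apply: eq_bigr => z _.
    by case: (z \in Zs) => /=; rewrite ?addr0 ?add0r.
  rewrite /bip_post -mulr_suml -/(W w) eW abs_help //.
  - by apply: sumr_ge0 => z _; exact: weight_ge0.
  - by apply: sumr_ge0 => z _; case: ifP => // _; exact: weight_ge0.
  - by rewrite -eW; exact: Wpos.
have mW : measurable_fun setT W.
  rewrite /W; apply: measurable_sum => z.
  exact: (@mweight R p d Omega prior phat ghat php ghp mp mg n E z).
have mSn : measurable_fun setT Sn.
  rewrite /Sn; apply: measurable_sum => z; case: (z \notin Zs); first exact: (@mweight R p d Omega prior phat ghat php ghp mp mg n E z).
  exact: measurable_cst.
have eS : [set w | eps <= `|\sum_(z in Zs) bip_post prior phat ghat n E z w - 1|] =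
    setT `&` [set w | eps * W w <= Sn w].
  apply/seteqP; split => w /=; have Wp : 0 < W w := Wpos n E w.
    by rewrite ident ler_pdivlMr // => h; split.
  by move=> [_ h]; rewrite ident ler_pdivlMr.
have mS : measurable [set w | eps <= `|\sum_(z in Zs) bip_post prior phat ghat n E z w - 1|].
  rewrite eS; apply: (@measurable_fun_le _ _ _ setT (fun w => eps * W w) Sn) => //.
  by apply: measurable_funM => //; exact: measurable_cst.
apply: le_trans PB; apply: le_measure; rewrite ?inE //.
move=> w /= Sw; apply: contrapT => nB; move: Sw; apply/negP; rewrite -ltNge ident.
apply: (@fin_help R _ _ _ _ _ _ (Wpos n E w) (w0leW n E w) eps0 rc).
have -> : r * wt n E z0 w * c = \sum_(z : subsel p) r * wt n E z0 w.
  by rewrite sumr_const -mulr_natr.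
apply: ler_sum => z _; case: ifP => zZ.
  exact: hB.
by apply: mulr_ge0; [exact: ltW | exact: weight_ge0].
Qed.
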